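(* Let $S$ be a finite set of size $n$ and let $\mathcal{X}_{\mathrm{Ab}}=\{*:S\times S\to S\mid (S,* )\text{ is an abelian group}\}$. Then there exists a query-algorithm with respect to $\mathcal{X}_{\mathrm{Ab}}$ which solves product-recovering and uses at most $n$ queries for every $*\in\mathcal{X}_{\mathrm{Ab}}$ (i.e. every leaf has depth at most $n$).
   Context: Let $S$ be a finite set and $\mathcal{X}$ a set of binary operations $*:S\times S\to S$. A query-algorithm with respect to $\mathcal{X}$ is a rooted tree $T$ in which every non-leaf node $v$ is labeled by a pair $(x_v,y_v)\in S^2$ (the query ''$x_v*y_v$''), leaves are unlabeled, and every edge from $v$ to a child is labeled by an element of $S$ (a possible answer), distinct edges leaving the same node having distinct labels. It is required that for every $*\in\mathcal{X}$ there is a path $(v_0,\dots,v_k)$ from the root $v_0$ to a leaf $v_k$ such that for each $0\le i<k$ the edge $(v_i,v_{i+1})$ is labeled $x_{v_i}*y_{v_i}$. This leaf is uniquely determined and is denoted $L( * )$, giving a map $L:\mathcal{X}\to\{\text{leaves of }T\}$. The query-algorithm solves product-recovering if $L$ is a bijection. The number of queries used on $*$ is the depth of $L( * )$. *)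

(* Defs.v *)
From mathcomp Require Import all_boot.
Set Implicit Arguments. Unset Strict Implicit. Unset Printing Implicit Defensive.

(* A non-leaf node is labeled by a
   query (x, y) and its outgoing edges are given by a partial function
   S -> option qtree: the child reached along the edge labeled a (if any).
   Distinct edges leaving a node automatically have distinct labels. *)
Inductive qtree (S : Type) : Type :=
| Leaf : qtree S
| Node : S -> S -> (S -> option (qtree S)) -> qtree S.
Arguments Leaf {S}.

(* Well-formedness: a labeled (non-leaf) node has at least one child
   (a node with no children is a leaf, hence unlabeled). *)
Fixpoint qwf (S : Type) (t : qtree S) : Prop :=
  match t with
  | Leaf => True
  | Node _ _ f =>
      (exists a, f a <> None) /\
      (forall a, match f a with Some t' => qwf t' | None => True end)
  end.

(* Leaves are identified by the sequence of edge labels from the root. *)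
Fixpoint is_leaf_path (S : Type) (t : qtree S) (p : seq S) : Prop :=
  match t, p with
  | Leaf, [::] => True
  | Node _ _ f, a :: p' =>
      match f a with Some t' => is_leaf_path t' p' | None => False end
  | _, _ => False
  end.

Fixpoint follow (S : Type) (t : qtree S) (op : S -> S -> S) : option (seq S) :=
  match t with
  | Leaf => Some [::]
  | Node x y f =>
      match f (op x y) with
      | Some t' => omap (cons (op x y)) (follow t' op)
      | None => None
      end
  end.

(* The tree is a query-algorithm w.r.t. X solving product-recovering:
   every op in X reaches a leaf, and L : X -> leaves is a bijection. *)
Definition solves_product_recovering (S : Type) (X : (S -> S -> S) -> Prop)
    (t : qtree S) : Prop :=
  qwf t /\
  (forall op, X op -> exists p, follow t op = Some p) /\
  (forall op1 op2 p, X op1 -> X op2 ->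
      follow t op1 = Some p -> follow t op2 = Some p -> op1 =2 op2) /\
  (forall p, is_leaf_path t p -> exists2 op, X op & follow t op = Some p).

Definition is_abelian_group (S : Type) (op : S -> S -> S) : Prop :=
  associative op /\ commutative op /\
  exists e : S, left_id e op /\ forall x, exists y, op y x = e.

(* Main.v *)
Require Import Defs.
From mathcomp Require Import all_boot.
From Stdlib Require Import ClassicalEpsilon.
Set Implicit Arguments. Unset Strict Implicit. Unset Printing Implicit Defensive.

Section Tree.
Variable S : Type.
Variable St : Type.
Variable stepS : St -> option (S * S).
Variable trans : St -> S -> St.

Fixpoint T (f : nat) (s : St) (C : (S -> S -> S) -> Prop) : qtree S :=
  match f with
  | 0 => Leaf
  | f'.+1 =>
    match stepS s with
    | None => Leaf
    | Some (x, y) =>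
      Node x y (fun a =>
        if excluded_middle_informative (exists op, C op /\ op x y = a)
        then Some (T f' (trans s a) (fun op => C op /\ op x y = a))
        else None)
    end
  end.

Fixpoint trace (op : S -> S -> S) (f : nat) (s : St) : seq S :=
  match f with
  | 0 => [::]
  | f'.+1 =>
    match stepS s with
    | None => [::]
    | Some (x, y) => op x y :: trace op f' (trans s (op x y))
    end
  end.

Lemma T_follow f s C op : C op -> follow (T f s C) op = Some (trace op f s).
Proof.
elim: f s C => [|f IH] s C Cop //=.
case: (stepS s) => [[x y]|] //=.
destruct excluded_middle_informative as [e0|n0]; last by case: n0; exists op.
by rewrite /= IH.
Qed.

Lemma T_qwf f s C : (exists op, C op) -> qwf (T f s C).
Proof.
elim: f s C => [|f IH] s C [op Cop] //=.
case: (stepS s) => [[x y]|] //=.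
split.
  exists (op x y); destruct excluded_middle_informative as [|n0] => //; case: n0; by exists op.
move=> a; destruct excluded_middle_informative as [[op' [C1 C2]]|] => //.
apply: IH; by exists op'.
Qed.

Lemma T_leaf f s C p : (exists op, C op) -> is_leaf_path (T f s C) p ->
  exists2 op, C op & trace op f s = p.
Proof.
elim: f s C p => [|f IH] s C p [op Cop] /=.
  by case: p => // _; exists op.
case: (stepS s) => [[x y]|] /=; last by case: p => // _; exists op.
case: p => // a p.
destruct excluded_middle_informative as [[op' [C1 C2]]|] => // Hl.
have [|op2 [C3 C4] E] := IH _ _ p _ Hl; first by exists op'.
by exists op2 => //=; rewrite C4 E.
Qed.

Lemma trace_size op f s : size (trace op f s) <= f.
Proof.
elim: f s => [|f IH] s //=.
case: (stepS s) => [[x y]|] //=; by rewrite ltnS.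
Qed.

Lemma trace_S op f s x y : stepS s = Some (x, y) ->
  trace op f.+1 s = op x y :: trace op f (trans s (op x y)).
Proof. by move=> /= ->. Qed.

End Tree.

Section Grp.
Variable S : finType.
Variables (op op' : S -> S -> S) (e e' : S).
Hypotheses (A : associative op) (Cm : commutative op) (Id : left_id e op)
  (Iv : forall x, exists y, op y x = e).
Hypotheses (A' : associative op') (Cm' : commutative op') (Id' : left_id e' op')
  (Iv' : forall x, exists y, op' y x = e').

Lemma rid x : op x e = x. Proof. by rewrite Cm Id. Qed.

Lemma canc a b c : op a b = op a c -> b = c.
Proof.
case: (Iv a) => u Hu E.
by rewrite -(Id b) -(Id c) -Hu -!A E.
Qed.

Lemma canc' a b c : op' a b = op' a c -> b = c.
Proof.
case: (Iv' a) => u Hu E.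
by rewrite -(Id' b) -(Id' c) -Hu -!A' E.
Qed.

Lemma idE : op' e e = e -> forall x, op' e x = x.
Proof.
move=> H x.
have : op' e e = op' e e' by rewrite H Cm' Id'.
by move/canc' => ->; rewrite Id'.
Qed.

Lemma inv_in (H : {set S}) : e \in H -> (forall a b, a \in H -> b \in H -> op a b \in H) ->
  forall a, a \in H -> exists2 b, b \in H & op b a = e.
Proof.
move=> eH cl a aH.
have sub : [set op a z | z in H] \subset H.
  by apply/subsetP => w /imsetP [z zH ->]; apply: cl.
have ci : #|[set op a z | z in H]| = #|H|.
  by apply: card_in_imset => u v _ _; apply: canc.
have : [set op a z | z in H] == H by rewrite eqEcard sub ci leqnn.
move/eqP => E; move: eH; rewrite -{1}E => /imsetP [z zH Ez].
by exists z => //; rewrite Cm Ez.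
Qed.

Definition Wp (L : {set S}) g := forall z, z \in L -> op g z \in L /\ op' g z = op g z.

Lemma Wmul L g1 g2 : Wp L g1 -> Wp L g2 -> g2 \in L -> Wp L (op g1 g2) /\ op g1 g2 \in L.
Proof.
move=> W1 W2 g2L; have [g12L E12] := W1 _ g2L; split => // z zL.
have [g2zL E2] := W2 _ zL; have [g12zL E1] := W1 _ g2zL.
by rewrite -A; split => //; rewrite -E12 -A' E2 E1.
Qed.

Definition cf y j := iter j (op y) e.

Lemma cf0 y : cf y 0 = e. Proof. by []. Qed.
Lemma cfS y j : cf y j.+1 = op y (cf y j). Proof. by []. Qed.
Lemma cf1 y : cf y 1 = y. Proof. by rewrite cfS cf0 rid. Qed.

Definition closedL (L : {set S}) := forall a b, a \in L -> b \in L -> op a b \in L /\ op' a b = op a b.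

Definition Ginv (L H : {set S}) (y c : S) (R : seq S) : Prop :=
 e \in H /\ closedL H /\ uniq R /\ (forall h, h \in R -> h \in H /\ h != e) /\
 exists i, [/\ 0 < i, c = cf y i,
   (forall z, z \in L <-> exists h j, [/\ h \in H, j <= i, z = op h (cf y j) & (j < i \/ h \notin R)]),
   (forall h j, h \in H -> j <= i -> (j < i \/ h \notin R) -> op' h (cf y j) = op h (cf y j)) &
   ((forall j, j < i -> op' y (cf y j) = cf y j.+1) /\
    (forall h j, h \in H -> j < i -> cf y i <> op h (cf y j)))].

Definition Finv (L : {set S}) y c : Prop :=
 exists i, [/\ 0 < i, c = cf y i, (forall z, z \in L <-> exists j, 0 < j <= i /\ z = cf y j),
    (forall j, 0 < j < i -> op' y (cf y j) = cf y j.+1) & (forall j, 0 < j < i -> cf y j <> cf y i)].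

Lemma Wfin (L : {set S}) y (gens : {set S}) :
  e \in L -> Wp L e -> Wp L y -> (forall h, h \in gens -> Wp L h) ->
  (forall a, a \in L -> exists h j, h \in gens /\ a = op h (cf y j)) ->
  closedL L.
Proof.
move=> eL We Wy Wg rep.
have Wc : forall j, Wp L (cf y j) /\ cf y j \in L.
  elim=> [|j [IH1 IH2]]; first by [].
  by rewrite cfS; apply: Wmul.
move=> a b aL bL.
have [h [j [hg ->]]] := rep _ aL.
have [Wa _] := Wmul (Wg _ hg) (Wc j).1 (Wc j).2.
exact: Wa.
Qed.


Lemma gen_end L H y c : Ginv L H y c [::] -> op y c \in L -> op' y c = op y c ->
  e \in L /\ closedL L.
Proof.
move=> [eH [clH [_ [_ [i [i0 ci mem agr [pw nw]]]]]]] zL Ez.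
have memR : forall z, z \in L <-> exists h j, [/\ h \in H, j <= i & z = op h (cf y j)].
  move=> z; split.
    by case/mem=> h [j [? ? ? _]]; exists h, j.
  by case=> h [j [? ? ?]]; apply/mem; exists h, j; split => //; right.
have agr2 : forall h j, h \in H -> j <= i -> op' h (cf y j) = op h (cf y j).
  by move=> h j hH ji; apply: agr => //; right.
have HL : forall h, h \in H -> h \in L.
  by move=> h hH; apply/memR; exists h, 0; rewrite rid.
have zH : op y c \in H.
  have [h [j [hH ji Ej]]] := (memR _).1 zL.
  case: j ji Ej => [|k] ki Ej; first by rewrite Ej cf0 rid.
  exfalso; apply: (nw h k hH ki); rewrite -ci; apply: (@canc y).
  by rewrite Ej cfS !A (Cm h).
have Id2 : forall x, op' e x = x.
  by apply: idE; have [_ ->] := clH _ _ eH eH; rewrite Id.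
have We : Wp L e by move=> z zL0; rewrite Id Id2.
have Wh : forall h, h \in H -> Wp L h.
  move=> h hH z /memR [h' [j [h'H ji ->]]].
  have [hh'H Ehh'] := clH _ _ hH h'H.
  split; first by rewrite A; apply/memR; exists (op h h'), j.
  transitivity (op' h (op' h' (cf y j))); first by rewrite agr2.
  by rewrite A' Ehh' agr2 // A.
have Wy : Wp L y.
  move=> z /memR [h [j [hH ji ->]]].
  rewrite A (Cm y) -A.
  case: (ltnP j i) => ji'.
    rewrite -cfS; split; first by apply/memR; exists h, j.+1.
    transitivity (op' y (op' h (cf y j))); first by rewrite agr2.
    by rewrite A' (Cm' y) -A' pw // agr2.
  have ej : j = i by apply/eqP; rewrite eqn_leq ji ji'.
  subst j; rewrite -ci.
  have [hzH Ehz] := clH _ _ hH zH.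
  split; first exact: HL.
  transitivity (op' y (op' h c)); first by rewrite ci agr2.
  by rewrite A' (Cm' y) -A' Ez Ehz.
split; first exact: HL.
apply: (@Wfin L y H) => //; first exact: HL.
by move=> a /memR [h [j [hH _ ->]]]; exists h, j.
Qed.

Lemma first_end L y c : Finv L y c -> op y c \in L -> op' y c = op y c ->
  c = e /\ e \in L /\ closedL L.
Proof.
move=> [i [i0 ci mem pw nw]] zL Ez.
have ce : c = e.
  have [j [/andP [j0 ji] Ej]] := (mem _).1 zL.
  case: j j0 ji Ej => [//|[|k]] _ ji Ej.
    by apply: (@canc y); rewrite Ej cf1 rid.
  exfalso; apply: (nw k.+1); first exact: ji.
  by rewrite -ci; apply: (@canc y); rewrite -cfS -Ej.
have eL : e \in L by rewrite -ce; apply/mem; exists i; rewrite ci i0 leqnn.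
have yL : y \in L by apply/mem; exists 1; rewrite cf1 i0.
have Wy : Wp L y.
  move=> z /mem [j [/andP [j0 ji] ->]].
  case: (ltnP j i) => ji'.
    rewrite -cfS; split; first by apply/mem; exists j.+1; rewrite ji'.
    by rewrite pw // j0.
  have ej : j = i by apply/eqP; rewrite eqn_leq ji ji'.
  subst j; rewrite -ci Ez ce rid; split => //.
split => //; split => //.
have Id2 : forall x, op' e x = x.
  have : op' y e = op' y e' by rewrite (Wy _ eL).2 rid Cm' Id'.
  by move/canc' => E x; rewrite E Id'.
have We : Wp L e by move=> z zL0; rewrite Id Id2.
apply: (@Wfin L y [set e]) => //.
  by move=> h /set1P ->.
by move=> a /mem [j [_ ->]]; exists e, j; rewrite set11 Id.
Qed.


Lemma first_cont L y c : Finv L y c -> op y c \notin L -> op' y c = op y c ->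
  Finv (op y c |: L) y (op y c).
Proof.
move=> [i [i0 ci mem pw nw]] zL Ez.
exists i.+1; split => //; first by rewrite cfS ci.
- move=> z; rewrite in_setU1; split.
    case/orP => [/eqP ->|/mem [j [/andP [j0 ji] ->]]].
      by exists i.+1; rewrite ci leqnn.
    by exists j; rewrite j0 (leq_trans ji).
  case=> j [/andP [j0 ji] ->]; case: (ltnP j i.+1) => ji'.
    by apply/orP; right; apply/mem; exists j; rewrite j0.
  have -> : j = i.+1 by apply/eqP; rewrite eqn_leq ji ji'.
  by rewrite cfS -ci eqxx.
- move=> j /andP [j0 ji]; case: (ltnP j i) => ji'; first by rewrite pw // j0.
  have -> : j = i by apply/eqP; rewrite eqn_leq -ltnS ji ji'.
  by rewrite cfS -ci Ez.
- move=> j /andP [j0 ji] E; move: zL; rewrite ci -cfS -E => /negP; apply.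
  by apply/mem; exists j; rewrite j0.
Qed.

Lemma gen_coset L H y c h R : Ginv L H y c (h :: R) -> op' h c = op h c ->
  op h c \notin L /\ Ginv (op h c |: L) H y c R.
Proof.
move=> [eH [clH [uR [Rm [i [i0 ci mem agr [pw nw]]]]]]] Ez.
have [hH he] := Rm h (mem_head _ _).
have hR : h \notin R by move: uR => /= /andP [].
have new : op h c \notin L.
  apply/negP => /mem [h' [j [h'H ji Ej hj]]].
  have [u uH uh] := inv_in eH (fun a b aH bH => (clH a b aH bH).1) hH.
  case: (ltnP j i) => ji'.
    apply: (nw (op u h') j) => //; first by have [] := clH _ _ uH h'H.
    by rewrite -ci -A -Ej A uh Id.
  have ej : j = i by apply/eqP; rewrite eqn_leq ji ji'.
  subst j; case: hj => [|hj]; first by rewrite ltnn.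
  have hh : h = h' by apply: (@canc c); rewrite Cm Ej ci Cm.
  by move: hj; rewrite -hh mem_head.
split => //.
split => //; split => //; split; first by move: uR => /= /andP [].
split; first by move=> h'' h''R; apply: Rm; rewrite inE h''R orbT.
exists i; split => //.
- move=> z; rewrite in_setU1; split.
    case/orP => [/eqP ->|/mem [h' [j [h'H ji Ej hj]]]].
      by exists h, i; rewrite ci; split => //; right.
    exists h', j; split => //; case: hj => [|hj]; first by left.
    by right; move: hj; rewrite inE negb_or => /andP [].
  case=> h' [j [h'H ji -> hj]].
  case: (boolP ((h' == h) && (j == i))) => [/andP [/eqP -> /eqP ->]|nhj].
    by rewrite -ci eqxx.
  apply/orP; right; apply/mem; exists h', j; split => //.
  case: (ltnP j i) => ji'; first by left.
  have ej : j = i by apply/eqP; rewrite eqn_leq ji ji'.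
  right; rewrite inE negb_or; case: hj => [|->]; first by rewrite ej ltnn.
  by move: nhj; rewrite ej eqxx andbT => ->.
- move=> h' j h'H ji hj.
  case: (boolP ((h' == h) && (j == i))) => [/andP [/eqP -> /eqP ->]|nhj].
    by rewrite -ci.
  apply: agr => //; case: (ltnP j i) => ji'; first by left.
  have ej : j = i by apply/eqP; rewrite eqn_leq ji ji'.
  right; rewrite inE negb_or; case: hj => [|->]; first by rewrite ej ltnn.
  by move: nhj; rewrite ej eqxx andbT => ->.
Qed.

Lemma gen_cont L H y c : Ginv L H y c [::] -> op y c \notin L -> op' y c = op y c ->
  Ginv (op y c |: L) H y (op y c) (enum (H :\ e)).
Proof.
move=> [eH [clH [_ [_ [i [i0 ci mem agr [pw nw]]]]]]] zL Ez.
have Id2 : forall x, op' e x = x.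
  by apply: idE; have [_ ->] := clH _ _ eH eH; rewrite Id.
have memR : forall z, z \in L <-> exists h j, [/\ h \in H, j <= i & z = op h (cf y j)].
  move=> z; split.
    by case/mem=> h [j [? ? ? _]]; exists h, j.
  by case=> h [j [? ? ?]]; apply/mem; exists h, j; split => //; right.
split => //; split => //; split; first exact: enum_uniq.
split; first by move=> h; rewrite mem_enum in_setD1 => /andP [].
exists i.+1; split => //; first by rewrite cfS ci.
- move=> z; rewrite in_setU1; split.
    case/orP => [/eqP ->|/memR [h [j [hH ji ->]]]].
      exists e, i.+1; rewrite Id cfS ci; split => //; right.
      by rewrite mem_enum in_setD1 eqxx.
    by exists h, j; split => //; [rewrite (leq_trans ji) | left].
  case=> h [j [hH ji -> hj]]; case: (ltnP j i.+1) => ji'.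
    by apply/orP; right; apply/memR; exists h, j.
  have ej : j = i.+1 by apply/eqP; rewrite eqn_leq ji ji'.
  case: hj => [|hj]; first by rewrite ej ltnn.
  have he : h = e.
    by apply/eqP; move: hj; rewrite mem_enum in_setD1 hH andbT negbK.
  by rewrite he Id ej cfS -ci eqxx.
- move=> h j hH ji hj; case: (ltnP j i.+1) => ji'.
    by apply: agr => //; right.
  have ej : j = i.+1 by apply/eqP; rewrite eqn_leq ji ji'.
  case: hj => [|hj]; first by rewrite ej ltnn.
  have he : h = e.
    by apply/eqP; move: hj; rewrite mem_enum in_setD1 hH andbT negbK.
  by rewrite he Id Id2.
- split.
    move=> j ji; case: (ltnP j i) => ji'; first exact: pw.
    have -> : j = i by apply/eqP; rewrite eqn_leq -ltnS ji ji'.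
    by rewrite cfS -ci Ez.
  move=> h j hH ji E; move: zL; rewrite ci -cfS E => /negP; apply.
  by apply/memR; exists h, j.
Qed.

Lemma newgen_ok (L : {set S}) y : e \in L -> closedL L -> y \notin L ->
  Ginv (y |: L) L y y (enum (L :\ e)).
Proof.
move=> eL clL yL.
have Id2 : forall x, op' e x = x.
  by apply: idE; have [_ ->] := clL _ _ eL eL; rewrite Id.
split => //; split => //; split; first exact: enum_uniq.
split; first by move=> h; rewrite mem_enum in_setD1 => /andP [].
exists 1; split => //; first by rewrite cf1.
- move=> z; rewrite in_setU1; split.
    case/orP => [/eqP ->|zL].
      exists e, 1; rewrite Id cf1; split => //; right.
      by rewrite mem_enum in_setD1 eqxx.
    by exists z, 0; rewrite cf0 rid; split => //; left.
  case=> h [j [hH ji -> hj]]; case: j ji hj => [|[|//]] ji hj.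
    by rewrite cf0 rid hH orbT.
  case: hj => [//|hj].
  have he : h = e.
    by apply/eqP; move: hj; rewrite mem_enum in_setD1 hH andbT negbK.
  by rewrite he Id cf1 eqxx.
- move=> h [|[|//]] hH _ hj; first by rewrite cf0 Cm' Id2 rid.
  case: hj => [//|hj].
  have he : h = e.
    by apply/eqP; move: hj; rewrite mem_enum in_setD1 hH andbT negbK.
  by rewrite he Id Id2.
- split; first by case=> // _; rewrite cf0 cf1 Cm' Id2.
  by move=> h [|//] hH _; rewrite cf1 cf0 rid => E; move: yL; rewrite E hH.
Qed.


Record ph := Ph { pL : {set S}; pH : {set S}; pe : S; py : S; pc : S; pR : seq S; pfirst : bool }.

Definition stepS (s : option ph) : option (S * S) :=
  match s with
  | None => None
  | Some p => Some (match pR p with h :: _ => (h, pc p) | [::] => (py p, pc p) end)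
  end.

Definition newgen (L : {set S}) (e0 : S) : option ph :=
  match [pick y | y \notin L] with
  | Some y => Some (Ph (y |: L) L e0 y y (enum (L :\ e0)) false)
  | None => None
  end.

Definition trans (s : option ph) (z : S) : option ph :=
  match s with
  | None => None
  | Some p =>
    match pR p with
    | h :: R' => Some (Ph (z |: pL p) (pH p) (pe p) (py p) (pc p) R' (pfirst p))
    | [::] =>
      if z \notin pL p then
        Some (Ph (z |: pL p) (pH p) (pe p) (py p) z (enum (pH p :\ pe p)) (pfirst p))
      else newgen (pL p) (if pfirst p then pc p else pe p)
    end
  end.

Definition Inv (s : option ph) : Prop :=
  match s with
  | None => op =2 op'
  | Some p =>
    if pfirst p then [/\ pH p = set0, pR p = [::] & Finv (pL p) (py p) (pc p)]
    else pe p = e /\ Ginv (pL p) (pH p) (py p) (pc p) (pR p)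
  end.

Definition grows (s s' : option ph) :=
  forall p p', s = Some p -> s' = Some p' -> #|pL p| < #|pL p'|.

Lemma newgen_inv (L : {set S}) : e \in L -> closedL L ->
  Inv (newgen L e) /\ forall p', newgen L e = Some p' -> #|L| < #|pL p'|.
Proof.
move=> eL clL; rewrite /newgen; case: pickP => [y yL|none].
  split; first by split => //; apply: newgen_ok.
  by move=> p' [<-] /=; rewrite cardsU1 yL.
split => // a b.
have aL : a \in L by move: (none a) => /= /negbFE.
have bL : b \in L by move: (none b) => /= /negbFE.
by have [_ ->] := clL _ _ aL bL.
Qed.

Lemma enum0 (x : S) : enum (set0 :\ x) = [::].
Proof.
have -> : set0 :\ x = set0 by apply/setP => z; rewrite !inE andbF.
exact: enum_set0.
Qed.

Lemma step_inv s x y : Inv s -> stepS s = Some (x, y) -> op' x y = op x y ->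
  Inv (trans s (op x y)) /\ grows s (trans s (op x y)).
Proof.
case: s => [[L H e0 y0 c R fst]|] //=.
case: fst => /=.
  case=> -> -> FI [<- <-] Ez /=.
  case: ifP => zL.
    split; first by split => //; [exact: enum0 | apply: first_cont].
    by move=> p p' [<-] [<-] /=; rewrite cardsU1 zL.
  move: zL => /negbFE zL.
  have [ce [eL clL]] := first_end FI zL Ez.
  rewrite ce; have [I1 I2] := newgen_inv eL clL.
  by split => // p p' [<-] /= E; apply: I2.
case=> -> GI.
case: R GI => [|h R] GI /= [<- <-] Ez.
  case: ifP => zL.
    split; first by split => //; apply: gen_cont.
    by move=> p p' [<-] [<-] /=; rewrite cardsU1 zL.
  move: zL => /negbFE zL.
  have [eL clL] := gen_end GI zL Ez.
  have [I1 I2] := newgen_inv eL clL.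
  by split => // p p' [<-] /= E; apply: I2.
have [new GI'] := gen_coset GI Ez.
split; first by split.
by move=> p p' [<-] [<-] /=; rewrite cardsU1 new.
Qed.

Lemma final f s : Inv s -> (forall p, s = Some p -> #|S| < #|pL p| + f) ->
  trace stepS trans op f s = trace stepS trans op' f s -> op =2 op'.
Proof.
elim: f s => [|f IH] s Is Hs.
  case: s Is Hs => [p|] //= _ Hs _.
  by move: (Hs p erefl); rewrite addn0 ltnNge max_card.
case: s Is Hs => [p|] Is Hs; last by [].
case Est: (stepS (Some p)) => [[x y]|]; last by [].
rewrite (trace_S trans op f Est) (trace_S trans op' f Est); case=> Exy Etr.
have [I1 I2] := step_inv Is Est (esym Exy).
apply: (IH _ I1); last by rewrite Etr Exy.
move=> p' Ep'; have := I2 _ _ erefl Ep'.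
have := Hs _ erefl; rewrite addnS => H1 H2.
by apply: leq_trans H1 _; rewrite ltn_add2r.
Qed.

End Grp.

Section Ex.
Variable S : finType.
Hypothesis hN : 0 < #|S|.

Definition zop (a b : S) : S :=
  enum_val (Ordinal (ltn_pmod (enum_rank a + enum_rank b) hN)).

Lemma zop_rank a b : val (enum_rank (zop a b)) = (enum_rank a + enum_rank b) %% #|S|.
Proof. by rewrite /zop enum_valK. Qed.

Lemma exists_ab : exists op : S -> S -> S, is_abelian_group op.
Proof.
exists zop; split; [|split].
- move=> a b c; apply: enum_rank_inj; apply: val_inj.
  by rewrite !zop_rank modnDmr modnDml addnA.
- move=> a b; apply: enum_rank_inj; apply: val_inj.
  by rewrite !zop_rank addnC.
exists (enum_val (Ordinal hN)); split.
  move=> b; apply: enum_rank_inj; apply: val_inj.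
  by rewrite zop_rank enum_valK /= add0n modn_small.
move=> b; exists (enum_val (Ordinal (ltn_pmod (#|S| - enum_rank b) hN))).
apply: enum_rank_inj; apply: val_inj.
rewrite zop_rank !enum_valK /= modnDml subnK ?modnn //.
exact: ltnW.
Qed.
End Ex.


Definition init (S : finType) : option (ph S) :=
  match [pick x : S] with
  | Some x => Some (Ph [set x] set0 x x x [::] true)
  | None => None
  end.

Lemma init_inv (S : finType) (op op' : S -> S -> S) (e : S) :
  commutative op -> left_id e op -> 0 < #|S| ->
  Inv op op' e (init S) /\ forall p, init S = Some p -> #|S| < #|pL p| + #|S|.
Proof.
move=> Cm Id hN; rewrite /init; case: pickP => [x _|none]; last first.
  by move: hN; rewrite lt0n => /pred0Pn [x _]; move: (none x).
split; last by move=> p [<-] /=; rewrite cards1 add1n.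
have cf1 : cf op e x 1 = x by rewrite /cf /= Cm Id.
split => //; exists 1; split => //.
- move=> z; rewrite in_set1; split.
    by move/eqP ->; exists 1.
  case=> j [/andP [j0 j1] ->]; have -> : j = 1 by apply/eqP; rewrite eqn_leq j1 j0.
  by rewrite cf1.
- by move=> [|j].
- by move=> [|j].
Qed.

Theorem mainTheorem5 (S : finType) (n : nat) (hn : #|S| = n) (hpos : 0 < n) :
  exists t : qtree S,
    solves_product_recovering (@is_abelian_group S) t /\
    forall op, is_abelian_group op ->
      forall p, follow t op = Some p -> size p <= n.
Proof.
have hN : 0 < #|S| by rewrite hn.
have ex := exists_ab hN.
exists (T (@stepS S) (@trans S) n (init S) (@is_abelian_group S)).
split; last first.
  move=> op Hop p; rewrite (T_follow _ _ _ _ Hop) => -[<-].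
  exact: trace_size.
split; first exact: T_qwf.
split.
  by move=> op Hop; exists (trace (@stepS S) (@trans S) op n (init S)); apply: T_follow.
split.
  move=> op1 op2 p H1 H2; rewrite (T_follow _ _ _ _ H1) (T_follow _ _ _ _ H2).
  move=> [E1] [E2].
  case: H1 => [A1 [C1 [e1 [I1 V1]]]]; case: H2 => [A2 [C2 [e2 [I2 V2]]]].
  have [Ii Is] := init_inv op2 C1 I1 hN.
  apply: (final A1 C1 I1 V1 A2 C2 I2 V2 Ii (f := n)); first by rewrite -hn.
  by rewrite E1 E2.
move=> p Hp; have [op Hop E] := T_leaf ex Hp.
by exists op => //; rewrite (T_follow _ _ _ _ Hop) E.
Qed.
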